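(* Let $M\ge 1$, $H\ge1$, $[M]=\{0,\dots,M-1\}$, and fix a message $s_{1:H}\in[M]^H$. Let $T\ge1$ and let $\mathbf z=(z_1,\dots,z_T)$ be a realized sequence of step seeds; let $\mathcal Z_T$ be the set of distinct values among $z_1,\dots,z_T$, and for $z\in\mathcal Z_T$ let $n_z=|\{t\in\{1,\dots,T\}: z_t=z\}|$, $S_T=\sum_{z\in\mathcal Z_T}n_z^2$ and $T_{\mathrm{eff}}=T^2/S_T$. To each distinct seed $z$ is associated a random pair $(i_z,\phi_z)$ with $i_z\in\{1,\dots,H\}$ and $\phi_z$ a permutation of $[M]$; at step $t$ the target bin is $r_t^\star=\phi_{z_t}(s_{i_{z_t}})$. Assume that, conditional on $\mathbf z$, the pairs $\{(i_z,\phi_z)\}_{z\in\mathcal Z_T}$ are independent across distinct seeds, and each $\phi_z$ is a uniformly random permutation of $[M]$ independent of $i_z$. Define $\hat\pi_T(r)=\frac1T\sum_{t=1}^T\mathbf 1\{r_t^\star=r\}$ for $r\in[M]$. Then for every $r\in[M]$, $$\mathbb E\big[\hat\pi_T(r)\mid \mathbf z\big]=\frac1M,$$ and for every $\epsilon>0$, $$\mathbb P\Big(\Big|\hat\pi_T(r)-\frac1M\Big|\ge\epsilon\ \Big|\ \mathbf z\Big)\le 2\exp\!\Big(-\frac{2\epsilon^2T^2}{S_T}\Big)=2\exp\!\big(-2\epsilon^2T_{\mathrm{eff}}\big).$$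
   Context: This models the QuantileMark watermark, in which at each step $t$ a position index $i_t$ (which message symbol to embed) and a permutation $\phi_t$ of $[M]$ (mapping symbols to quantile-bin indices) are derived by a pseudorandom function from a secret key and a step seed $z_t$ (a hash of the local context); repeated seeds reuse the same pair. $\hat\pi_T$ is the empirical occupancy of target bins over $T$ steps. *)

(* Defs.v *)
From HB Require Import structures.
From mathcomp Require Import all_boot all_order all_algebra all_fingroup.
From mathcomp Require Import reals sequences exp.
Set Implicit Arguments. Unset Strict Implicit. Unset Printing Implicit Defensive.
Import Order.TTheory GRing.Theory Num.Theory.
Local Open Scope ring_scope.

(* A finite probability space: a mass function P on a finite sample space
   Omega (everything below is conditional on the realized seed sequence zs). *)
Definition is_pmf (R : realType) (Omega : finType) (P : Omega -> R) : Prop :=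
  (forall w, 0 <= P w) /\ \sum_(w : Omega) P w = 1.

Definition Prob (R : realType) (Omega : finType) (P : Omega -> R)
  (A : pred Omega) : R := \sum_(w : Omega | A w) P w.

Definition Expect (R : realType) (Omega : finType) (P : Omega -> R)
  (X : Omega -> R) : R := \sum_(w : Omega) P w * X w.

Definition distinct_seeds (Z : eqType) (T : nat) (zs : 'I_T -> Z) : seq Z :=
  undup [seq zs t | t <- enum 'I_T].

Definition nseed (Z : eqType) (T : nat) (zs : 'I_T -> Z) (z : Z) : nat :=
  #|[set t : 'I_T | zs t == z]|.

Definition S_T (Z : eqType) (T : nat) (zs : 'I_T -> Z) : nat :=
  (\sum_(z <- distinct_seeds zs) (nseed zs z) ^ 2)%N.

Definition T_eff (R : realType) (Z : eqType) (T : nat) (zs : 'I_T -> Z) : R :=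
  (T%:R ^+ 2) / (S_T zs)%:R.

Definition target_bin (Omega : finType) (Z : eqType) (T M H : nat)
  (zs : 'I_T -> Z) (s : 'I_H -> 'I_M)
  (i : Z -> Omega -> 'I_H) (phi : Z -> Omega -> {perm 'I_M})
  (t : 'I_T) (w : Omega) : 'I_M :=
  phi (zs t) w (s (i (zs t) w)).

Definition pihat (R : realType) (Omega : finType) (Z : eqType) (T M H : nat)
  (zs : 'I_T -> Z) (s : 'I_H -> 'I_M)
  (i : Z -> Omega -> 'I_H) (phi : Z -> Omega -> {perm 'I_M})
  (r : 'I_M) (w : Omega) : R :=
  (\sum_(t : 'I_T) ((target_bin zs s i phi t w == r) : nat)%:R) / T%:R.

(* Main.v *)
Require Import Defs.
From HB Require Import structures.
From mathcomp Require Import all_boot all_order all_algebra all_fingroup.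
From mathcomp Require Import reals sequences exp.
From mathcomp Require Import all_classical all_reals all_analysis.
From mathcomp Require Import ring lra.
Import Order.TTheory GRing.Theory Num.Theory.
Import numFieldNormedType.Exports.
Local Open Scope ring_scope.

Section Calc.
Variable R : realType.
Local Open Scope classical_set_scope.

Lemma ndecr_deriv (f df : R -> R) :
  (forall x : R, is_derive x (1:R) f (df x)) -> (forall x, 0 <= df x) ->
  forall a b, a <= b -> f a <= f b.
Proof.
move=> fd dfge a b ab.
have [|c _ e] := MVT_segment ab (fun x _ => fd x).
  apply/continuous_subspaceT=> x.
  apply/differentiable_continuous/derivable1_diffP.
  by case: (fd x).
by rewrite -subr_ge0 e mulr_ge0 // subr_ge0.
Qed.

Lemma q_deriv (p x : R) (D := fun h : R => 1 - p + p * expR h) :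
  D x != 0 ->
  is_derive x 1 (fun h => p * expR h * (D h)^-1)
     (p * expR x * (- (D x) ^- 2 * (p * expR x)) + (D x)^-1 * (p * expR x)).
Proof.
move=> Dx.
have h1 : is_derive x 1 (fun h : R => p * expR h) (p * expR x).
  exact: (@is_deriveZ R R R expR p x 1 (expR x) (is_derive_expR x)).
have h2 : is_derive x 1 D (p * expR x).
  rewrite /D.
  have := @is_deriveD R R R (cst (1 - p)) (fun h : R => p * expR h) x 1 0 (p * expR x) (is_derive_cst _ _ _) h1.
  by rewrite add0r.
have h3 := is_deriveV Dx h2.
have := @is_deriveM R R (fun h : R => p * expR h) (fun h => (D h)^-1) x 1 _ _ h1 h3.
by [].
Qed.

Lemma cont_of_deriv (f df : R -> R) (a b : R) :
  (forall x : R, is_derive x (1:R) f (df x)) -> {within `[a, b], continuous f}.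
Proof.
move=> fd; apply/continuous_subspaceT=> x.
apply/differentiable_continuous/derivable1_diffP.
by case: (fd x).
Qed.

Lemma max_at0 (f df : R -> R) :
  (forall x : R, is_derive x (1:R) f (df x)) ->
  (forall x, 0 <= x -> df x <= 0) -> (forall x, x <= 0 -> 0 <= df x) ->
  forall x, f x <= f 0.
Proof.
move=> fd h1 h2 x.
have [x0|x0] := leP 0 x.
  have [|c] := MVT_segment x0 (fun y _ => fd y); first exact: cont_of_deriv.
  rewrite in_itv /= => /andP[c0 _] e.
  by rewrite -subr_le0 e subr0 mulr_le0_ge0 // h1.
have x0' := ltW x0.
have [|c] := MVT_segment x0' (fun y _ => fd y); first exact: cont_of_deriv.
rewrite in_itv /= => /andP[_ c0] e.
by rewrite -subr_ge0 e mulr_ge0 // ?h2 // sub0r oppr_ge0.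
Qed.

Lemma lin_deriv (a x : R) : is_derive x (1:R) (fun h : R => a * h) a.
Proof.
have H := @is_deriveZ R R R id a x 1 1 (is_derive_id x 1).
move: H; rewrite [a *: 1]mulr1 => H; exact: H.
Qed.

Lemma G_sq (b D : R) : D != 0 ->
  4^-1 - (b * (- D ^- 2 * b) + D^-1 * b) = (2^-1 - b * D^-1) ^+ 2.
Proof.
move=> D0; rewrite -exprVn; set u := D^-1.
by field.
Qed.

Definition Dp (p h : R) := 1 - p + p * expR h.

Lemma Dp_gt0 p h : 0 <= p <= 1 -> 0 < Dp p h.
Proof.
case/andP=> p0 p1; rewrite /Dp.
have [->|pn0] := eqVneq p 0; first by rewrite subr0 mul0r addr0.
have pp : 0 < p by rewrite lt_def pn0.
have : 0 < p * expR h by rewrite mulr_gt0 // expR_gt0.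
lra.
Qed.

Definition Gf (p h : R) := 4^-1 * h - p * expR h * (Dp p h)^-1 + p.

Lemma Gf_ndecr p : 0 <= p <= 1 -> forall a b, a <= b -> Gf p a <= Gf p b.
Proof.
move=> hp.
have Dn0 x : Dp p x != 0 by rewrite gt_eqF // Dp_gt0.
pose qd x := p * expR x * (- (Dp p x) ^- 2 * (p * expR x)) + (Dp p x)^-1 * (p * expR x).
have qD x : is_derive x (1:R) (fun h => p * expR h * (Dp p h)^-1) (qd x).
  exact: (@q_deriv p x (Dn0 x)).
apply: (@ndecr_deriv (Gf p) (fun x => 4^-1 - qd x)).
  move=> x.
  have H1 := @is_deriveB R R R (fun h : R => 4^-1 * h) (fun h => p * expR h * (Dp p h)^-1) x 1 _ _ (lin_deriv _ x) (qD x).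
  have := @is_deriveD R R R _ (cst p) x 1 _ 0 H1 (is_derive_cst _ _ _).
  by rewrite addr0.
move=> x; rewrite /qd G_sq //; exact: sqr_ge0.
Qed.

Lemma Gf0 p : Gf p 0 = 0.
Proof. by rewrite /Gf /Dp expR0 mulr0 mulr1 subrK invr1 mulr1 subrK. Qed.

Definition gE (p h : R) := - (p * h) - 8^-1 * (h * h).

Lemma gE_deriv p x : is_derive x (1:R) (gE p) (- p - 4^-1 * x).
Proof.
have H1 := lin_deriv p x.
have H2 := @is_deriveM R R id id x 1 1 1 (is_derive_id x 1) (is_derive_id x 1).
have H3 := @is_deriveZ R R R _ (8^-1) x 1 _ H2.
have H4 := @is_deriveN R R R _ x 1 _ H1.
have := @is_deriveB R R R _ _ x 1 _ _ H4 H3.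
move=> H; refine (is_derive_eq (H : is_derive x 1 (gE p) _) _).
rewrite /= /GRing.scale /= !mulr1.
have -> : (4:R)^-1 = 8^-1 * 2 by field.
ring.
Qed.

Definition Rt (p h : R) := Dp p h * expR (gE p h).

Lemma Rt_le1 p h : 0 <= p <= 1 -> Rt p h <= 1.
Proof.
move=> hp.
have Dn0 x : Dp p x != 0 by rewrite gt_eqF // Dp_gt0.
have DD x : is_derive x (1:R) (Dp p) (p * expR x).
  have h1 : is_derive x 1 (fun h : R => p * expR h) (p * expR x).
    exact: (@is_deriveZ R R R expR p x 1 (expR x) (is_derive_expR x)).
  have := @is_deriveD R R R (cst (1 - p)) (fun h : R => p * expR h) x 1 0 (p * expR x) (is_derive_cst _ _ _) h1.
  by rewrite add0r.
have ED x : is_derive x (1:R) (fun h => expR (gE p h)) (expR (gE p x) * (- p - 4^-1 * x)).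
  exact: (@is_derive1_comp R expR (gE p) x _ _ (is_derive_expR _) (gE_deriv p x)).
have RD x : is_derive x (1:R) (Rt p) (- (expR (gE p x) * Dp p x) * Gf p x).
  have := @is_deriveM R R (Dp p) (fun h => expR (gE p h)) x 1 _ _ (DD x) (ED x).
  move=> H; refine (is_derive_eq (H : is_derive x 1 (Rt p) _) _).
  rewrite /GRing.scale /= /Gf.
  have := Dn0 x; move: (Dp p x) => d d0.
  by field.
have -> : 1 = Rt p 0.
  rewrite /Rt /gE /Dp expR0 mulr1 subrK mul1r (_ : - (p * 0) - 8^-1 * (0 * 0) = 0) ?expR0 //.
  by ring.
have eD x : 0 <= expR (gE p x) * Dp p x by rewrite mulr_ge0 ?expR_ge0 // ltW // Dp_gt0.
apply: (@max_at0 (Rt p) (fun x => - (expR (gE p x) * Dp p x) * Gf p x) RD).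
  move=> x x0; rewrite mulNr oppr_le0 mulr_ge0 //.
  by rewrite -(Gf0 p) Gf_ndecr.
move=> x x0; rewrite mulNr oppr_ge0 mulr_ge0_le0 //.
by rewrite -(Gf0 p) Gf_ndecr.
Qed.

Lemma hoeffding_bern (p h : R) : 0 <= p <= 1 ->
  (1 - p) * expR (- (h * p)) + p * expR (h * (1 - p)) <= expR (h ^+ 2 / 8).
Proof.
move=> hp.
have e1 : (1 - p) * expR (- (h * p)) + p * expR (h * (1 - p)) = Dp p h * expR (- (h * p)).
  rewrite /Dp (_ : h * (1 - p) = h + - (h * p)); last by ring.
  rewrite expRD; ring.
have e2 : expR (h ^+ 2 / 8) = expR (- gE p h) * expR (- (h * p)).
  rewrite -expRD /gE; congr expR; ring.
rewrite e1 e2 ler_pM2r ?expR_gt0 //.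
have := @Rt_le1 p h hp; rewrite /Rt expRN.
by rewrite -[_^-1]mul1r ler_pdivlMr ?expR_gt0.
Qed.
End Calc.

Section FinProb.
Variables (R : realType) (Omega : finType) (P : Omega -> R).

Lemma partition_expect (A : finType) (f : Omega -> A) (h : A -> R) :
  \sum_w P w * h (f w) = \sum_a h a * Prob P (fun w => f w == a).
Proof.
rewrite (partition_big f xpredT) //=; apply: eq_bigr => a _.
rewrite /Prob big_distrr /=; apply: eq_bigr => w /eqP <-.
by rewrite mulrC.
Qed.

Lemma indep_expect n (V : finType) (Y : 'I_n -> Omega -> V) :
  (forall F : {ffun 'I_n -> V},
     Prob P (fun w => [forall k, Y k w == F k]) =
     \prod_k Prob P (fun w => Y k w == F k)) ->
  forall g : 'I_n -> V -> R,
    Expect P (fun w => \prod_k g k (Y k w)) =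
    \prod_k Expect P (fun w => g k (Y k w)).
Proof.
move=> hind g.
rewrite /Expect.
under eq_bigr => k _ do rewrite (partition_expect _ (Y k) (g k)).
rewrite bigA_distr_bigA /=.
have -> : \sum_w P w * \prod_k g k (Y k w) =
    \sum_w P w * (fun F : {ffun 'I_n -> V} => \prod_k g k (F k)) [ffun k => Y k w].
  by apply: eq_bigr => w _ /=; congr (_ * _); apply: eq_bigr => k _; rewrite ffunE.
rewrite (partition_expect _ (fun w => [ffun k => Y k w]) (fun F : {ffun 'I_n -> V} => \prod_k g k (F k))); apply: eq_bigr => F _.
rewrite big_split /=; congr (_ * _).
rewrite -hind /Prob; apply: eq_bigl => w /=.
apply/eqP/forallP => [<- k|H]; first by rewrite ffunE.
by apply/ffunP => k; rewrite ffunE; apply/eqP.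
Qed.

Hypothesis hP : is_pmf P.

Lemma chernoff_fin (Yf : Omega -> R) (eps mu : R) : 0 <= mu ->
  Prob P (fun w => eps <= Yf w) <=
  expR (- (mu * eps)) * Expect P (fun w => expR (mu * Yf w)).
Proof.
move=> mu0; case: hP => P0 _.
rewrite /Prob /Expect big_distrr /= [X in _ <= X](bigID (fun w => eps <= Yf w)) /=.
rewrite -[X in X <= _]addr0; apply: lerD; last first.
  by apply: sumr_ge0 => w _; rewrite mulr_ge0 ?expR_ge0 ?mulr_ge0 ?expR_ge0.
apply: ler_sum => w hw.
rewrite mulrCA -[X in X <= _]mulr1 ler_wpM2l //.
rewrite -expRD.
have : 0 <= - (mu * eps) + mu * Yf w by rewrite addrC -mulrBr mulr_ge0 // subr_ge0.
move=> h0; apply: le_trans (expR_ge1Dx _); lra.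
Qed.

Lemma union_bound (a b : pred Omega) :
  Prob P (fun w => a w || b w) <= Prob P a + Prob P b.
Proof.
case: hP => P0 _.
rewrite /Prob !(big_mkcond (fun w => _ || _)) (big_mkcond a) (big_mkcond b) -big_split /=.
apply: ler_sum => w _.
by case: (a w); case: (b w); rewrite ?addr0 ?add0r ?lerDl ?P0 ?lexx.
Qed.

Lemma hoeff_bin (X : Omega -> R) (p h : R) :
  (forall w, X w = 0 \/ X w = 1) -> Expect P X = p -> 0 <= p <= 1 ->
  Expect P (fun w => expR (h * (X w - p))) <= expR (h ^+ 2 / 8).
Proof.
move=> X01 EX hp; case: hP => P0 P1.
have -> : Expect P (fun w => expR (h * (X w - p))) =
   expR (h * (1 - p)) * Expect P X + expR (- (h * p)) * (1 - Expect P X).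
  rewrite /Expect.
  have -> : 1 - \sum_w P w * X w = \sum_w (P w - P w * X w) by rewrite sumrB P1.
  rewrite !mulr_sumr -big_split /=.
  apply: eq_bigr => w _.
  case: (X01 w) => ->.
    have -> : h * (0 - p) = - (h * p) by ring.
    ring.
  ring.
rewrite EX (_ : _ * p + _ = (1 - p) * expR (- (h * p)) + p * expR (h * (1 - p))); last by ring.
exact: hoeffding_bern.
Qed.

End FinProb.

Lemma count_perm (M : nat) (x y y' : 'I_M) :
  (\sum_(σ : {perm 'I_M}) ((σ x == y) : nat) = \sum_(σ : {perm 'I_M}) ((σ x == y') : nat))%N.
Proof.
rewrite (reindex_inj (@mulIg _ (tperm y y'))) /=.
apply: eq_bigr => σ _; rewrite permM -[X in _ == X](tpermR y y') (inj_eq (@perm_inj _ (tperm y y'))).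
by [].
Qed.

Lemma count_perm_R (R : realType) (M : nat) (x y : 'I_M) :
  \sum_(σ : {perm 'I_M}) (((σ x == y) : nat)%:R : R) = (M`!)%:R / M%:R.
Proof.
have M0 : (0 < M)%N by case: M x {y} => [[]|].
have tot : (\sum_(y0 : 'I_M) \sum_(σ : {perm 'I_M}) ((σ x == y0) : nat))%N = M`!.
  rewrite exchange_big /= -[RHS]card_Sn -sum1_card; apply: eq_bigr => σ _.
  rewrite (bigD1 (σ x)) //= eqxx big1 // => y1; rewrite eq_sym => /negPf -> //.
have : (\sum_(y0 : 'I_M) \sum_(σ : {perm 'I_M}) ((σ x == y0) : nat))%N =
       (M * \sum_(σ : {perm 'I_M}) ((σ x == y) : nat))%N.
  rewrite (eq_bigr (fun _ => \sum_(σ : {perm 'I_M}) ((σ x == y) : nat))%N).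
    by rewrite sum_nat_const card_ord.
  by move=> y0 _; apply: count_perm.
rewrite tot => e.
rewrite -natr_sum e natrM; field; by rewrite pnatr_eq0 -lt0n.
Qed.

Section Prob.
Variables (R : realType) (M H T : nat) (Z : eqType)
  (s : 'I_H -> 'I_M) (zs : 'I_T -> Z)
  (Omega : finType) (P : Omega -> R)
  (i : Z -> Omega -> 'I_H) (phi : Z -> Omega -> {perm 'I_M}).

Let seeds := distinct_seeds zs.

Lemma seeds_uniq : uniq seeds.
Proof. exact: undup_uniq. Qed.

Lemma mem_seeds t : zs t \in seeds.
Proof. by rewrite mem_undup map_f // mem_enum. Qed.

Lemma sum_partition (F : Z -> R) :
  \sum_(t : 'I_T) F (zs t) = \sum_(z <- seeds) (nseed zs z)%:R * F z.
Proof.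
have e z : (nseed zs z)%:R * F z = \sum_(t | zs t == z) F (zs t).
  rewrite /nseed -sum1_card natr_sum mulr_suml.
  apply: eq_big => t; first by rewrite inE.
  by rewrite inE => /eqP ->; rewrite mul1r.
under [RHS]eq_bigr => z _ do rewrite e big_mkcond.
rewrite exchange_big /=; apply: eq_bigr => t _.
rewrite (bigD1_seq (zs t) (mem_seeds t) seeds_uniq) /= eqxx big1 ?addr0 //.
by move=> z; rewrite eq_sym => /negPf ->.
Qed.


Let n := size seeds.
Let zk (k : 'I_n) : Z := tnth (in_tuple seeds) k.
Let Yv z w : ('I_H * {perm 'I_M})%type := (i z w, phi z w).
Variable r : 'I_M.
Let hX (v : ('I_H * {perm 'I_M})%type) : R := ((v.2 (s v.1) == r) : nat)%:R.
Let c (k : 'I_n) : R := (nseed zs (zk k))%:R / T%:R.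

Lemma pihat_eq w : pihat R zs s i phi r w = \sum_k c k * hX (Yv (zk k) w).
Proof.
rewrite /pihat /target_bin.
rewrite (sum_partition (fun z => hX (Yv z w))).
rewrite (big_tnth _ _ seeds) mulr_suml; apply: eq_bigr => k _.
by rewrite /c mulrAC.
Qed.

Lemma sum_c : (0 < T)%N -> \sum_k c k = 1.
Proof.
move=> T0.
have := sum_partition (fun _ => 1); rewrite sumr_const card_ord big_tnth => e.
rewrite /c -mulr_suml.
have -> : \sum_k (nseed zs (zk k))%:R = T%:R :> R.
  by rewrite e; apply: eq_bigr => k _; rewrite mulr1.
by rewrite divff // pnatr_eq0 -lt0n.
Qed.

Lemma sum_c2 : \sum_k c k ^+ 2 = (S_T zs)%:R / T%:R ^+ 2.
Proof.
rewrite /S_T natr_sum (big_tnth _ _ seeds) mulr_suml; apply: eq_bigr => k _.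
by rewrite /c expr_div_n natrX.
Qed.

Lemma zk_inj (k k' : 'I_n) : (zk k == zk k') = (k == k').
Proof.
rewrite /zk !(tnth_nth (zk k)) /= nth_uniq //; last exact: seeds_uniq.
Qed.


Hypothesis hind : forall A : Z -> {set 'I_H * {perm 'I_M}},
      Prob P (fun w => all (fun z => (i z w, phi z w) \in A z)
                           (distinct_seeds zs))
      = \prod_(z <- distinct_seeds zs)
          Prob P (fun w => (i z w, phi z w) \in A z).

Lemma indepY (F : {ffun 'I_n -> ('I_H * {perm 'I_M})%type}) :
  Prob P (fun w => [forall k, Yv (zk k) w == F k]) =
  \prod_k Prob P (fun w => Yv (zk k) w == F k).
Proof.
pose A z := [set v | [forall k, (zk k == z) ==> (v == F k)]].
have hA k v : (v \in A (zk k)) = (v == F k).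
  rewrite inE; apply/forallP/idP => [/(_ k)|/eqP -> k'].
    by rewrite eqxx.
  by rewrite zk_inj; apply/implyP => /eqP ->.
have := hind A; rewrite (big_tnth _ _ seeds) => e.
transitivity (Prob P (fun w => all (fun z => (i z w, phi z w) \in A z) seeds)).
  rewrite /Prob; apply: eq_bigl => w.
  apply/forallP/(all_tnthP (t := in_tuple seeds)) => /= h k; first exact: (etrans (hA k _) (h k)).
  by rewrite -hA; apply: h.
rewrite e; apply: eq_bigr => k _; rewrite /Prob; apply: eq_bigl => w.
by rewrite hA.
Qed.

Hypothesis hunif : forall z, z \in distinct_seeds zs ->
     forall (a : 'I_H) (sigma : {perm 'I_M}),
       Prob P (fun w => (i z w == a) && (phi z w == sigma))
       = Prob P (fun w => i z w == a) / (M`!)%:R.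
Hypothesis hP : is_pmf P.
Hypothesis M0 : (0 < M)%N.

Lemma EX k : Expect P (fun w => hX (Yv (zk k) w)) = 1 / M%:R.
Proof.
have zin : zk k \in seeds by apply: mem_tnth.
rewrite /Expect (partition_expect R Omega P _ (Yv (zk k)) hX).
transitivity (\sum_a \sum_(σ : {perm 'I_M}) hX (a, σ) * Prob P (fun w => Yv (zk k) w == (a, σ))).
  by rewrite pair_bigA; apply: eq_bigr => -[a σ] _.
have tot : \sum_a Prob P (fun w => i (zk k) w == a) = 1.
  case: hP => _ P1; rewrite -P1.
  have := partition_expect R Omega P _ (i (zk k)) (fun _ => 1).
  under eq_bigr do rewrite mulr1.
  move=> ->; apply: eq_bigr => a _; by rewrite mul1r.
transitivity ((\sum_a Prob P (fun w => i (zk k) w == a)) / M%:R); last by rewrite tot.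
rewrite mulr_suml; apply: eq_bigr => a _.
transitivity (\sum_(σ : {perm 'I_M}) (((σ (s a) == r) : nat)%:R : R) * (Prob P (fun w => i (zk k) w == a) / (M`!)%:R)).
  apply: eq_bigr => σ _; rewrite /hX.
  congr (_ * _); have := hunif _ zin a σ; rewrite /Prob => <-; apply: eq_bigl => w.
  by rewrite /Yv xpair_eqE.
rewrite -mulr_suml count_perm_R; field.
by rewrite pnatr_eq0 -lt0n M0 /= gt_eqF // ltr0n fact_gt0.
Qed.


Hypothesis T0 : (0 < T)%N.
Let p : R := 1 / M%:R.

Lemma p01 : 0 <= p <= 1.
Proof.
rewrite /p mul1r invr_ge0 ler0n /= invf_le1 ?ltr0n // ler1n //.
Qed.

Lemma Y_eq w : pihat R zs s i phi r w - p = \sum_k c k * (hX (Yv (zk k) w) - p).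
Proof.
rewrite pihat_eq; under [RHS]eq_bigr do rewrite mulrBr.
by rewrite sumrB -mulr_suml sum_c // mul1r.
Qed.

Lemma Expect_ge0 (f : Omega -> R) : (forall w, 0 <= f w) -> 0 <= Expect P f.
Proof.
case: hP => P0 _ f0; rewrite /Expect; apply: sumr_ge0 => w _; exact: mulr_ge0.
Qed.

Lemma mgf (mu : R) :
  Expect P (fun w => expR (mu * (pihat R zs s i phi r w - p))) <=
  expR (mu ^+ 2 * ((S_T zs)%:R / T%:R ^+ 2) / 8).
Proof.
pose g (k : 'I_n) (v : ('I_H * {perm 'I_M})%type) := expR (mu * c k * (hX v - p)).
have -> : Expect P (fun w => expR (mu * (pihat R zs s i phi r w - p))) =
          Expect P (fun w => \prod_k g k ((fun k => Yv (zk k)) k w)).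
  rewrite /Expect; apply: eq_bigr => w _; congr (_ * _).
  rewrite Y_eq mulr_sumr expR_sum; apply: eq_bigr => k _.
  by rewrite /g mulrA.
rewrite (indep_expect R Omega P n _ (fun k => Yv (zk k)) indepY g).
apply: le_trans (_ : \prod_k expR ((mu * c k) ^+ 2 / 8) <= _).
  apply: ler_prod => k _; rewrite Expect_ge0 /=; last by move=> w; rewrite expR_ge0.
  apply: (@hoeff_bin R Omega P hP (fun w => hX (Yv (zk k) w)) p (mu * c k)).
  - by move=> w; rewrite /hX; case: (_ == r); [right | left].
  - exact: EX.
  - exact: p01.
rewrite -expR_sum -sum_c2 ler_expR mulr_sumr mulr_suml; apply: ler_sum => k _.
by rewrite exprMn.
Qed.

Lemma S_gt0 : (0 < S_T zs)%N.
Proof.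
pose t0 := Ordinal T0.
rewrite /S_T (bigD1_seq (zs t0) (mem_seeds t0) seeds_uniq) /=.
rewrite ltn_addr // expn_gt0 orbF; apply/card_gt0P; exists t0; by rewrite inE.
Qed.


Lemma final :
    Expect P (pihat R zs s i phi r) = 1 / M%:R /\
    (forall eps : R, 0 < eps ->
       Prob P (fun w => eps <= `|pihat R zs s i phi r w - 1 / M%:R|)
       <= 2 * expR (- (2 * eps ^+ 2 * T%:R ^+ 2 / (S_T zs)%:R)) /\
       2 * expR (- (2 * eps ^+ 2 * T%:R ^+ 2 / (S_T zs)%:R))
       = 2 * expR (- (2 * eps ^+ 2 * T_eff R zs))).
Proof.
split.
  rewrite /Expect; under eq_bigr do rewrite pihat_eq mulr_sumr.
  rewrite exchange_big /=.
  transitivity (\sum_k c k * p).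
    apply: eq_bigr => k _.
    transitivity (c k * Expect P (fun w => hX (Yv (zk k) w))); last by rewrite EX.
    rewrite /Expect mulr_sumr.
    by apply: eq_bigr => w _; rewrite mulrCA.
  by rewrite -mulr_suml sum_c // mul1r.
move=> eps eps0; split; last by rewrite /T_eff !mulrA.
have S0 : (S_T zs)%:R != 0 :> R by rewrite pnatr_eq0 -lt0n S_gt0.
have Tn0 : T%:R != 0 :> R by rewrite pnatr_eq0 -lt0n T0.
pose mu := 4 * eps * T%:R ^+ 2 / (S_T zs)%:R.
have mu0 : 0 <= mu.
  by rewrite /mu divr_ge0 ?mulr_ge0 ?ler0n ?sqr_ge0 // ltW.
have ex : expR (- (mu * eps)) * expR (mu ^+ 2 * ((S_T zs)%:R / T%:R ^+ 2) / 8) =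
          expR (- (2 * eps ^+ 2 * T%:R ^+ 2 / (S_T zs)%:R)).
  rewrite -expRD; congr expR; rewrite /mu; field.
  by rewrite S0 Tn0.
set Yd := fun w => pihat R zs s i phi r w - p.
have -> : Prob P (fun w => eps <= `|pihat R zs s i phi r w - 1 / M%:R|) =
          Prob P (fun w => (eps <= Yd w) || (eps <= - Yd w)).
  by rewrite /Prob; apply: eq_bigl => w; rewrite ler_normr.
have B1 : Prob P (fun w => eps <= Yd w) <= expR (- (2 * eps ^+ 2 * T%:R ^+ 2 / (S_T zs)%:R)).
  apply: le_trans (@chernoff_fin R Omega P hP Yd eps mu mu0) _.
  rewrite -ex ler_wpM2l ?expR_ge0 //; exact: mgf.
have B2 : Prob P (fun w => eps <= - Yd w) <= expR (- (2 * eps ^+ 2 * T%:R ^+ 2 / (S_T zs)%:R)).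
  apply: le_trans (@chernoff_fin R Omega P hP (fun w => - Yd w) eps mu mu0) _.
  rewrite -ex ler_wpM2l ?expR_ge0 //.
  have := mgf (- mu); rewrite sqrrN.
  congr (_ <= _); rewrite /Expect; apply: eq_bigr => w _.
  by rewrite mulrN mulNr.
apply: le_trans (@union_bound R Omega P hP _ _) _.
move: B1 B2; set E := expR _; set Q1 := Prob _ _; set Q2 := Prob _ _.
lra.
Qed.

End Prob.

Theorem proposition1 (R : realType) (M H T : nat) (Z : eqType)
  (s : 'I_H -> 'I_M) (zs : 'I_T -> Z)
  (Omega : finType) (P : Omega -> R)
  (i : Z -> Omega -> 'I_H) (phi : Z -> Omega -> {perm 'I_M}) :
  (0 < M)%N -> (0 < H)%N -> (0 < T)%N ->
  is_pmf P ->
  (* the pairs (i_z, phi_z), z in Z_T, are mutually independent *)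
  (forall A : Z -> {set 'I_H * {perm 'I_M}},
      Prob P (fun w => all (fun z => (i z w, phi z w) \in A z)
                           (distinct_seeds zs))
      = \prod_(z <- distinct_seeds zs)
          Prob P (fun w => (i z w, phi z w) \in A z)) ->
  (* each phi_z is uniform on permutations of [M] and independent of i_z *)
  (forall z, z \in distinct_seeds zs ->
     forall (a : 'I_H) (sigma : {perm 'I_M}),
       Prob P (fun w => (i z w == a) && (phi z w == sigma))
       = Prob P (fun w => i z w == a) / (M`!)%:R) ->
  forall r : 'I_M,
    Expect P (pihat R zs s i phi r) = 1 / M%:R /\
    (forall eps : R, 0 < eps ->
       Prob P (fun w => eps <= `|pihat R zs s i phi r w - 1 / M%:R|)
       <= 2 * expR (- (2 * eps ^+ 2 * T%:R ^+ 2 / (S_T zs)%:R)) /\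
       2 * expR (- (2 * eps ^+ 2 * T%:R ^+ 2 / (S_T zs)%:R))
       = 2 * expR (- (2 * eps ^+ 2 * T_eff R zs))).
Proof.
move=> M0 _ T0 hP hind hunif r.
exact: (@final R M H T Z s zs Omega P i phi r hind hunif hP M0 T0).
Qed.
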